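(* Let $f$ be a modulus function, $\beta\in(0,1]$, $m\ge0$ an integer, $\theta=(k_r)$ a lacunary sequence, and $p=(p_k)$ a sequence of positive reals with $0<h=\inf_kp_k\le p_k\le\sup_kp_k=H<\infty$ such that $\lim_kp_k$ exists and is $>0$. If a sequence $X=(X_k)$ of fuzzy numbers satisfies $\lim_r\frac{1}{h_r^\beta}\sum_{k\in I_r}[f(d(\Delta^mX_k,X'))]^{p_k}=0$ and $\lim_r\frac{1}{h_r^\beta}\sum_{k\in I_r}[f(d(\Delta^mX_k,X''))]^{p_k}=0$ for fuzzy numbers $X',X''$, then $X'=X''$; i.e., the $w_p^\beta(\theta,f,F,\Delta^m)$-limit is unique.
   Context: A fuzzy number is a map $X:\mathbb{R}\to[0,1]$ which is normal, fuzzy convex, upper semicontinuous, with compact closure of $\{t:X(t)>0\}$; $L(\mathbb{R})$ is the set of fuzzy numbers. Level sets $[X]^\alpha=\{t:X(t)\ge\alpha\}$ ($\alpha\in(0,1]$), $[X]^0=\overline{\{t:X(t)>0\}}$, are compact intervals $[u^\alpha,v^\alpha]$. Subtraction: $[X-Y]^\alpha=[u_1^\alpha-v_2^\alpha,v_1^\alpha-u_2^\alpha]$. Metric: $d(X,Y)=\sup_{\alpha\in[0,1]}\max\{|u_1^\alpha-u_2^\alpha|,|v_1^\alpha-v_2^\alpha|\}$. $(\Delta^0X)_k=X_k$, $(\Delta^1X)_k=X_k-X_{k+1}$, $(\Delta^mX)_k=(\Delta^1(\Delta^{m-1}X))_k$. A lacunary sequence is an increasing integer sequence $\theta=(k_r)_{r\ge0}$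 with $k_0=0$, $h_r=k_r-k_{r-1}\to\infty$; $I_r=(k_{r-1},k_r]$. A modulus function is $f:[0,\infty)\to[0,\infty)$ with $f(x)=0$ iff $x=0$, $f(x+y)\le f(x)+f(y)$, $f$ increasing, and $f$ right-continuous at $0$. *)

(* Defs.v *)
From HB Require Import structures.
From mathcomp Require Import all_boot all_order all_algebra.
From mathcomp Require Import all_classical all_reals all_analysis.
Set Implicit Arguments. Unset Strict Implicit. Unset Printing Implicit Defensive.
Import Order.TTheory GRing.Theory Num.Theory.
Import numFieldNormedType.Exports.
Local Open Scope classical_set_scope.
Local Open Scope ring_scope.

Section Fuzzy.
Variable R : realType.

Definition is_fuzzy_number (X : R -> R) : Prop :=
  [/\ (forall t, 0 <= X t <= 1),
      (exists t, X t = 1),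
      (forall s t l, 0 <= l <= 1 ->
          Num.min (X s) (X t) <= X (l * s + (1 - l) * t)),
      (forall t (e : R), 0 < e -> \forall s \near t, X s < X t + e)
    & compact (closure [set t | 0 < X t])].

Definition level (X : R -> R) (a : R) : set R :=
  if a == 0 then closure [set t | 0 < X t] else [set t | a <= X t].

Definition lev_lo (X : R -> R) (a : R) : R := inf (level X a).
Definition lev_hi (X : R -> R) (a : R) : R := sup (level X a).

(* X - Y: the fuzzy number with level sets [u1^a - v2^a, v1^a - u2^a],
   i.e. membership (X - Y)(t) = sup {a in (0,1] | t in that interval} (0 if none). *)
Definition fsub (X Y : R -> R) : R -> R := fun t =>
  sup ([set a | 0 < a <= 1 /\
         lev_lo X a - lev_hi Y a <= t <= lev_hi X a - lev_lo Y a] `|` [set 0]).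

Definition fdist (X Y : R -> R) : R :=
  sup [set Num.max `|lev_lo X a - lev_lo Y a| `|lev_hi X a - lev_hi Y a|
       | a in [set a : R | 0 <= a <= 1]].

Fixpoint fdelta (m : nat) (X : nat -> R -> R) : nat -> R -> R :=
  match m with
  | 0 => X
  | m'.+1 => fun k => fsub (fdelta m' X k) (fdelta m' X k.+1)
  end.

Definition is_modulus (f : R -> R) : Prop :=
  [/\ (forall x, 0 <= x -> 0 <= f x),
      (forall x, 0 <= x -> (f x = 0 <-> x = 0)),
      (forall x y, 0 <= x -> 0 <= y -> f (x + y) <= f x + f y),
      (forall x y, 0 <= x -> x <= y -> f x <= f y)
    & f x @[x --> 0^'+] --> f 0].

Definition is_lacunary (th : nat -> nat) : Prop :=
  [/\ th 0 = 0%N,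
      (forall r, (th r < th r.+1)%N)
    & (forall M : nat, exists N : nat, forall r, (N <= r)%N -> (M <= th r.+1 - th r)%N)].

Definition lac_h (th : nat -> nat) (r : nat) : nat := (th r - th r.-1)%N.

Definition wsum (f : R -> R) (beta : R) (m : nat) (th : nat -> nat) (p : nat -> R)
    (X : nat -> R -> R) (L : R -> R) (r : nat) : R :=
  ((lac_h th r)%:R `^ beta)^-1 *
  \sum_((th r.-1).+1 <= k < (th r).+1) (f (fdist (fdelta m X k) L)) `^ (p k).

End Fuzzy.

(* Main.v *)
Require Import Defs.
From HB Require Import structures.
From mathcomp Require Import all_boot all_order all_algebra.
From mathcomp Require Import all_classical all_reals all_analysis.
From mathcomp Require Import ring lra.
Import Order.TTheory GRing.Theory Num.Theory.
Import numFieldNormedType.Exports.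
Local Open Scope classical_set_scope.
Local Open Scope ring_scope.
Set Implicit Arguments. Unset Strict Implicit. Unset Printing Implicit Defensive.

Section S.
Variable R : realType.
Implicit Types (Y Z : R -> R) (M : R).

Definition nice Y M := forall a : R, 0 <= a <= 1 ->
  level Y a !=set0 /\ (forall t, level Y a t -> `|t| <= M).

Lemma closed_normle M : closed [set t : R | `|t| <= M].
Proof.
have -> : [set t : R | `|t| <= M] = [set t | t <= M] `&` [set t | -M <= t].
  apply/seteqP; split => t /=; first by rewrite ler_norml => /andP[-> ->].
  by case=> h1 h2; rewrite ler_norml h1 h2.
by apply: closedI; [exact: closed_le | exact: closed_ge].
Qed.

Lemma nice_bd Y M a : nice Y M -> 0 <= a <= 1 ->
  [/\ -M <= lev_lo Y a, lev_lo Y a <= lev_hi Y a & lev_hi Y a <= M].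
Proof.
move=> hN ha; have [[t St] Hb] := hN a ha.
have hl : has_lbound (level Y a).
  by exists (-M) => s /Hb; rewrite ler_norml => /andP[].
have hu : has_ubound (level Y a).
  by exists M => s /Hb; rewrite ler_norml => /andP[].
split.
- by apply: lb_le_inf; [exists t|] => // s /Hb; rewrite ler_norml => /andP[].
- exact: (le_trans (ge_inf hl St) (ub_le_sup hu St)).
- by apply: ge_sup; [exists t|] => // s /Hb; rewrite ler_norml => /andP[].
Qed.

Lemma fuzzy_nice Y : is_fuzzy_number Y -> exists M, nice Y M.
Proof.
case=> _ [t1 Ht1] _ _ /compact_bounded [M [_ HM]].
have {}HM : forall t, closure [set t | 0 < Y t] t -> `|t| <= `|M| + 1.
  move=> t Ct; apply: (HM (`|M| + 1)) => //.
  by rewrite (le_lt_trans (ler_norm _)) ?ltrDl.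
exists (`|M| + 1) => a /andP[a0 a1]; rewrite /level.
have Hs : forall t, 0 < Y t -> `|t| <= `|M| + 1.
  by move=> t Yt; apply: HM; apply: subset_closure.
case: eqP => [_|/eqP an0].
  split; last exact: HM.
  by exists t1; apply: subset_closure => /=; rewrite Ht1.
split; first by exists t1 => /=; rewrite Ht1.
move=> t /= aY; apply: Hs; apply: lt_le_trans aY.
by rewrite lt_neqAle eq_sym an0.
Qed.

Lemma nice_mono Y M N : M <= N -> nice Y M -> nice Y N.
Proof.
move=> MN hN a ha; have [h1 h2] := hN a ha; split => // t /h2 /le_trans; exact.
Qed.

Lemma fsub_zero A B M t : nice A M -> nice B M -> M + M < `|t| -> fsub A B t = 0.
Proof.
move=> hA hB ht; rewrite /fsub.
suff -> : [set a | 0 < a <= 1 /\ lev_lo A a - lev_hi B a <= t <= lev_hi A a - lev_lo B a] = set0.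
  by rewrite set0U sup1.
apply/seteqP; split => // b /= [/andP[b0 b1] /andP[c1 c2]].
have hb : 0 <= b <= 1 by rewrite b1 ltW.
have [l1 l2 l3] := nice_bd hA hb; have [k1 k2 k3] := nice_bd hB hb.
move: ht; rewrite ltNge => /negP; apply; rewrite ler_norml; apply/andP; split.
  apply: le_trans c1; rewrite opprD; apply: lerD => //; by rewrite lerN2.
by apply: (le_trans c2); apply: lerD => //; rewrite lerNl.
Qed.

Lemma fsub_one A B M : nice A M -> nice B M ->
  exists t, 1 <= fsub A B t.
Proof.
move=> hA hB; exists (lev_lo A 1 - lev_hi B 1); rewrite /fsub.
have h1 : 0 <= (1:R) <= 1 by rewrite ler01 lexx.
have [l1 l2 l3] := nice_bd hA h1; have [k1 k2 k3] := nice_bd hB h1.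
apply: ub_le_sup.
  exists 1 => x /= [[/andP[_ ->] _//]|->]; exact: ler01.
left; split; first by rewrite ltr01 lexx.
by rewrite lexx /= lerD // lerN2 (le_trans k2).
Qed.

Lemma fsub_nice A B M : nice A M -> nice B M -> nice (fsub A B) (M + M).
Proof.
move=> hA hB.
have Hz : forall t, 0 < fsub A B t -> `|t| <= M + M.
  move=> t; apply: contraTT; rewrite -!ltNge => ht.
  by rewrite (fsub_zero hA hB ht) ltxx.
have [t0 Ht0] := fsub_one hA hB.
move=> a /andP[a0 a1]; rewrite /level; case: eqP => [_|/eqP an0].
  split.
    by exists t0; apply: subset_closure => /=; apply: lt_le_trans Ht0.
  move=> t Ct.
  have : closure [set t : R | `|t| <= M + M] t.
    by apply: closureS Ct => s /= /Hz.
  by rewrite -(proj1 (closure_id _) (@closed_normle (M + M))).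
split; first by exists t0 => /=; apply: le_trans Ht0.
move=> t /= aY; apply: Hz; apply: lt_le_trans aY.
by rewrite lt_neqAle eq_sym an0.
Qed.

Lemma fdelta_nice (X : nat -> R -> R) m :
  (forall k, is_fuzzy_number (X k)) -> forall k, exists M, nice (fdelta m X k) M.
Proof.
move=> HX; elim: m => [|m IH] k /=; first exact: fuzzy_nice.
have [M1 h1] := IH k; have [M2 h2] := IH k.+1.
exists (Num.max M1 M2 + Num.max M1 M2); apply: fsub_nice.
  by apply: nice_mono h1; rewrite le_max lexx.
by apply: nice_mono h2; rewrite le_max lexx orbT.
Qed.

Definition gap Y Z (a : R) := Num.max `|lev_lo Y a - lev_lo Z a| `|lev_hi Y a - lev_hi Z a|.

Lemma nice_norm Y M a : nice Y M -> 0 <= a <= 1 ->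
  `|lev_lo Y a| <= M /\ `|lev_hi Y a| <= M.
Proof.
move=> hY ha; have [l1 l2 l3] := nice_bd hY ha.
rewrite !ler_norml l1 l3 /=; split.
  exact: le_trans l2 l3.
by rewrite andbT (le_trans l1 l2).
Qed.

Lemma gap_bd Y Z M N a : nice Y M -> nice Z N -> 0 <= a <= 1 -> gap Y Z a <= M + N.
Proof.
move=> hY hZ ha; have [l1 l2] := nice_norm hY ha; have [k1 k2] := nice_norm hZ ha.
rewrite /gap ge_max; apply/andP; split; apply: le_trans (ler_normB _ _) _; exact: lerD.
Qed.

Lemma fdist_gap Y Z M N : nice Y M -> nice Z N ->
  fdist Y Z = sup [set gap Y Z a | a in [set a : R | 0 <= a <= 1]].
Proof. by []. Qed.

Lemma fdist_ub Y Z M N a : nice Y M -> nice Z N -> 0 <= a <= 1 -> gap Y Z a <= fdist Y Z.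
Proof.
move=> hY hZ ha; apply: ub_le_sup; last by exists a.
exists (M + N) => x [b hb <-]; exact: gap_bd hY hZ hb.
Qed.

Lemma fdist_le Y Z x : (forall a, 0 <= a <= 1 -> gap Y Z a <= x) -> fdist Y Z <= x.
Proof.
move=> H; apply: ge_sup; first by exists (gap Y Z 0), 0 => //; apply/andP; split.
by move=> y [b hb <-]; apply: H.
Qed.

Lemma fdist_ge0 Y Z M N : nice Y M -> nice Z N -> 0 <= fdist Y Z.
Proof.
move=> hY hZ; have h0 : 0 <= (0:R) <= 1 by apply/andP; split.
apply: le_trans (fdist_ub hY hZ h0).
by rewrite le_max normr_ge0.
Qed.

Lemma fdist_tri Y Z W M N K : nice Y M -> nice Z N -> nice W K ->
  fdist Z W <= fdist Y Z + fdist Y W.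
Proof.
move=> hY hZ hW; apply: fdist_le => a ha.
have e1 := fdist_ub hY hZ ha; have e2 := fdist_ub hY hW ha.
move: e1 e2; rewrite /gap !ge_max => /andP[e1 e2] /andP[e3 e4].
apply/andP; split.
  apply: le_trans (ler_distD (lev_lo Y a) _ _) _.
  by rewrite distrC lerD.
apply: le_trans (ler_distD (lev_hi Y a) _ _) _.
by rewrite distrC lerD.
Qed.

Lemma usc_inf (X : R -> R) (a : R) : is_fuzzy_number X -> [set t | a <= X t] !=set0 ->
  has_lbound [set t | a <= X t] -> a <= X (inf [set t | a <= X t]).
Proof.
case=> _ _ _ usc _ Sne hlb; set S := [set t | a <= X t].
rewrite leNgt; apply/negP => hlt.
have e0 : 0 < a - X (inf S) by rewrite subr_gt0.
have := usc (inf S) _ e0; rewrite addrC subrK => /nbhs_ballP [eps /= eps0 Hb].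
have [e Se He] := inf_adherent eps0 (conj Sne hlb).
have : ball (inf S) eps e.
  rewrite /ball /= distrC ger0_norm ?subr_ge0; last exact: ge_inf.
  by rewrite ltrBlDl.
move=> /Hb /=; rewrite ltNge; move: Se; rewrite /S /= => ->. done.
Qed.

Lemma usc_sup (X : R -> R) (a : R) : is_fuzzy_number X -> [set t | a <= X t] !=set0 ->
  has_ubound [set t | a <= X t] -> a <= X (sup [set t | a <= X t]).
Proof.
case=> _ _ _ usc _ Sne hub; set S := [set t | a <= X t].
rewrite leNgt; apply/negP => hlt.
have e0 : 0 < a - X (sup S) by rewrite subr_gt0.
have := usc (sup S) _ e0; rewrite addrC subrK => /nbhs_ballP [eps /= eps0 Hb].
have [e Se He] := sup_adherent eps0 (conj Sne hub).
have : ball (sup S) eps e.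
  rewrite /ball /= ger0_norm ?subr_ge0; last exact: ub_le_sup.
  by rewrite ltrBlDl -ltrBlDr.
move=> /Hb /=; rewrite ltNge; move: Se; rewrite /S /= => ->. done.
Qed.

Lemma level_char (X : R -> R) (a t : R) : is_fuzzy_number X -> 0 < a <= 1 ->
  (a <= X t) = (lev_lo X a <= t <= lev_hi X a).
Proof.
move=> hX /andP[a0 a1]; have [M hN] := fuzzy_nice hX.
have ha : 0 <= a <= 1 by rewrite a1 ltW.
have [Sne Sb] := hN a ha.
move: Sne Sb; rewrite /lev_lo /lev_hi /level (gt_eqF a0) => Sne Sb.
set S := [set t | a <= X t] in Sne Sb *.
have hlb : has_lbound S by exists (-M) => s /Sb; rewrite ler_norml => /andP[].
have hub : has_ubound S by exists M => s /Sb; rewrite ler_norml => /andP[].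
apply/idP/idP.
  by move=> h; rewrite (ge_inf hlb h) (ub_le_sup hub h).
move=> /andP[h1 h2].
have i1 : a <= X (inf S) := usc_inf hX Sne hlb.
have i2 : a <= X (sup S) := usc_sup hX Sne hub.
have [e|ne] := eqVneq (inf S) (sup S).
  by have -> : t = inf S by apply/le_anti; rewrite h1 e h2.
have lt : inf S < sup S by rewrite lt_neqAle ne (le_trans h1 h2).
have d0 : 0 < sup S - inf S by rewrite subr_gt0.
set l := (sup S - t) / (sup S - inf S).
have l01 : 0 <= l <= 1.
  rewrite divr_ge0 ?subr_ge0 ?(ltW lt) //= ler_pdivrMr // mul1r.
  by rewrite lerD2l lerN2.
case: hX => _ _ conv _ _.
have := conv (inf S) (sup S) l l01.
have -> : l * inf S + (1 - l) * sup S = t.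
  rewrite /l; field; by rewrite subr_eq0 eq_sym.
by apply: le_trans; rewrite le_min i1 i2.
Qed.

Lemma fdist0_eq (X1 X2 : R -> R) : is_fuzzy_number X1 -> is_fuzzy_number X2 ->
  fdist X1 X2 <= 0 -> X1 = X2.
Proof.
move=> h1 h2 hd.
have [M1 n1] := fuzzy_nice h1; have [M2 n2] := fuzzy_nice h2.
have lev : forall a t, 0 < a <= 1 -> (a <= X1 t) = (a <= X2 t).
  move=> a t ha; have ha' : 0 <= a <= 1 by case/andP: ha => a0 ->; rewrite ltW.
  have := le_trans (fdist_ub n1 n2 ha') hd.
  rewrite /gap ge_max !normr_le0 !subr_eq0 => /andP[/eqP e1 /eqP e2].
  by rewrite (level_char _ h1 ha) (level_char _ h2 ha) e1 e2.
have key : forall (Y Z : R -> R), is_fuzzy_number Y -> is_fuzzy_number Z ->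
    (forall a t, 0 < a <= 1 -> (a <= Y t) = (a <= Z t)) -> forall t, Y t <= Z t.
  move=> Y Z hY hZ H t.
  case: hY => /(_ t) /andP[y0 y1] _ _ _ _; case: hZ => /(_ t) /andP[z0 z1] _ _ _ _.
  have [e|ne] := eqVneq (Y t) 0; first by rewrite e.
  have ya : 0 < Y t <= 1 by rewrite y1 lt_neqAle eq_sym ne y0.
  by rewrite -(H _ _ ya).
apply/funext => t; apply/le_anti; rewrite !key //.
by move=> a s ha; rewrite lev.
Qed.
End S.

Theorem theorem3p4 (R : realType) (f : R -> R) (beta : R) (m : nat)
  (th : nat -> nat) (p : nat -> R) (X : nat -> R -> R) (X' X'' : R -> R) :
  is_modulus f ->
  0 < beta <= 1 ->
  is_lacunary th ->
  (forall k, 0 < p k) ->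
  0 < inf (range p) ->
  has_ubound (range p) ->
  cvg (p @ \oo) -> 0 < lim (p @ \oo) ->
  (forall k, is_fuzzy_number (X k)) ->
  is_fuzzy_number X' -> is_fuzzy_number X'' ->
  wsum f beta m th p X X' @ \oo --> 0 ->
  wsum f beta m th p X X'' @ \oo --> 0 ->
  X' = X''.
Proof.
move=> hf /andP[b0 b1] [th0 thS _] hp0 _ [H hH] _ _ hX hX' hX'' c1 c2.
have [M' n'] := fuzzy_nice hX'; have [M'' n''] := fuzzy_nice hX''.
apply: fdist0_eq => //.
rewrite leNgt; apply/negP => D0; set D := fdist X' X'' in D0.
case: hf => f0 fz fsub fmono _.
have D20 : 0 < D / 2 by rewrite divr_gt0.
have c0 : 0 < f (D / 2).
  rewrite lt_neqAle f0 ?ltW // andbT; apply/eqP => /esym /(fz _ (ltW D20)).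
  by move=> e; move: D20; rewrite e ltxx.
set b := Num.min (f (D / 2)) 1.
have bc : b <= f (D / 2) by rewrite ge_min lexx.
have b0' : 0 < b by rewrite lt_min c0 ltr01.
have b1' : b <= 1 by rewrite ge_min lexx orbT.
set c := b `^ H.
have cpos : 0 < c by apply: powR_gt0.
have term : forall k, c <= f (fdist (fdelta m X k) X') `^ p k + f (fdist (fdelta m X k) X'') `^ p k.
  move=> k; have [N nY] := fdelta_nice m hX k.
  have tri := fdist_tri nY n' n''.
  have g1 := fdist_ge0 nY n'; have g2 := fdist_ge0 nY n''.
  have pH : p k <= H by apply: hH; exists k.
  have big : forall x, D / 2 <= x -> c <= f x `^ p k.
    move=> x hx; have x0 : 0 <= x by apply: le_trans hx; apply: ltW.
    apply: (le_trans (ger_powR _ pH)); first by rewrite b0' b1'.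
    apply: ge0_ler_powR; first exact: ltW.
    - by rewrite nnegrE ltW.
    - by rewrite nnegrE f0.
    by apply: le_trans bc _; apply: fmono => //; exact: ltW.
  have [h1|h1] : D / 2 <= fdist (fdelta m X k) X' \/ D / 2 <= fdist (fdelta m X k) X''.
    case: (leP (D / 2) (fdist (fdelta m X k) X')) => h; [by left|right].
    rewrite -/D in tri; lra.
  by apply: le_trans (big _ h1) _; rewrite lerDl powR_ge0.
  by apply: le_trans (big _ h1) _; rewrite lerDr powR_ge0.
have ev : \forall t \near \oo,
    (wsum f beta m th p X X' + wsum f beta m th p X X'') t < c.
  by apply: (cvgr_lt _ (cvgD c1 c2)); rewrite addr0.
have [r [r0 hr]] := filter_ex (filterI (nbhs_infty_gt 0) ev).
move: hr; apply/negP; rewrite -leNgt /=.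
have -> : (wsum f beta m th p X X' + wsum f beta m th p X X'') r =
  wsum f beta m th p X X' r + wsum f beta m th p X X'' r by [].
rewrite /wsum -mulrDr -big_split /=.
have hpos : (0 < lac_h th r)%N.
  by rewrite /lac_h subn_gt0 -{2}(prednK r0) thS.
have hs : c *+ lac_h th r <= \sum_((th r.-1).+1 <= k < (th r).+1)
   (f (fdist (fdelta m X k) X') `^ p k + f (fdist (fdelta m X k) X'') `^ p k).
  have := ler_sum_nat (m := (th r.-1).+1) (n := (th r).+1) (F := fun _ => c) (fun i _ => term i).
  by rewrite sumr_const_nat subSS.
set hr := (lac_h th r)%:R : R.
have hr1 : 1 <= hr by rewrite /hr ler1n.
have hb0 : 0 < hr `^ beta by apply: powR_gt0; apply: lt_le_trans hr1.
have hbr : hr `^ beta <= hr by apply: ler1_powR.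
apply: le_trans (ler_wpM2l _ hs); last by rewrite invr_ge0 ltW.
rewrite -mulr_natr -/hr mulrCA; apply: ler_peMr; first exact: ltW.
by rewrite ler_pdivlMl // mulr1.
Qed.
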